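(* Let $r\in\{1,\infty\}$ and $N\in\{0,2,3,\ldots\}$. Every separable metric space of diameter no greater than $r$ admits an isometric embedding into the metric space $\mathbb{G}_r(N)$ (with metric $(x,y)\mapsto p(x-y)$, $p$ its value).
   Context: All groups are Abelian. A value on $G$ is $p\colon G\to[0,\infty)$ with $p(x)=0\iff x=0$, $p(-x)=p(x)$, $p(x+y)\leqslant p(x)+p(y)$. Class $\mathcal{O}_0$: $\lim_n p(na)/n=0$ for all $a$. $\mathfrak{G}_r(N)$: separable valued Abelian groups of class $\mathcal{O}_0$ with $p\leqslant r$ (vacuous if $r=\infty$) and of exponent $N$ if $N\neq0$. $\mathbb{G}_r(N)$ is the valued Abelian group, unique up to isometric group isomorphism, which (G1) is complete and in $\mathfrak{G}_r(N)$; (G2) for every finite valued Abelian group $(H,+,q)$ (of exponent $N$ if $N\neq0$) with $q\leqslant r$, subgroup $K$, isometric homomorphism $\varphi\colon K\to\mathbb{G}_r(N)$ and $\varepsilon\in(0,1)$, there is a homomorphism $\varphi_\varepsilon\colon H\to\mathbb{G}_r(N)$ with $p(\varphi(x)-\varphi_\varepsilon(x))\leqslant\varepsilon$ on $K$ and $(1-\varepsilon)q\leqslant p\circ\varphi_\varepsilon\leqslant(1+\varepsilon)q$ on $H$; (G3) if $N=0$, finite-order elements are dense. *)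

(* Defs.v *)
From HB Require Import structures.
From mathcomp Require Import all_boot all_order all_algebra.
From mathcomp Require Import all_classical all_reals all_analysis.
Set Implicit Arguments. Unset Strict Implicit. Unset Printing Implicit Defensive.
Import Order.TTheory GRing.Theory Num.Theory.
Import numFieldNormedType.Exports.
Local Open Scope classical_set_scope.
Local Open Scope ring_scope.

Definition is_value (R : realType) (G : zmodType) (p : G -> R) : Prop :=
  (forall x, 0 <= p x) /\
  (forall x, p x = 0 <-> x = 0) /\
  (forall x, p (- x) = p x) /\
  (forall x y, p (x + y) <= p x + p y).

Definition class_O0 (R : realType) (G : zmodType) (p : G -> R) : Prop :=
  forall a : G, (fun n : nat => p (a *+ n) / n%:R) @ \oo --> (0 : R^o).

Definition bounded_by (R : realType) (G : zmodType) (p : G -> R) (r : \bar R) : Prop :=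
  forall x, ((p x)%:E <= r)%E.

Definition exponent_cond (G : zmodType) (N : nat) : Prop :=
  (N != 0)%N -> forall x : G, x *+ N = 0.

Definition separable_value (R : realType) (G : zmodType) (p : G -> R) : Prop :=
  exists D : set G, countable D /\
    forall x e, 0 < e -> exists y, D y /\ p (x - y) < e.

Definition complete_value (R : realType) (G : zmodType) (p : G -> R) : Prop :=
  forall u : nat -> G,
    (forall e, 0 < e -> exists M, forall m n, (M <= m)%N -> (M <= n)%N ->
        p (u m - u n) < e) ->
    exists l : G, forall e, 0 < e -> exists M, forall n, (M <= n)%N ->
        p (u n - l) < e.

Definition in_frakG (R : realType) (r : \bar R) (N : nat) (G : zmodType)
    (p : G -> R) : Prop :=
  is_value p /\ separable_value p /\ class_O0 p /\ bounded_by p r /\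
  exponent_cond G N.

Definition is_subgroup (H : finZmodType) (K : {set H}) : Prop :=
  0 \in K /\ (forall x y, x \in K -> y \in K -> x - y \in K).

Definition G2_property (R : realType) (r : \bar R) (N : nat) (G : zmodType)
    (p : G -> R) : Prop :=
  forall (H : finZmodType) (q : H -> R) (K : {set H}) (phi : H -> G) (eps : R),
    is_value q -> bounded_by q r -> exponent_cond H N ->
    is_subgroup K ->
    (forall x y, x \in K -> y \in K -> phi (x - y) = phi x - phi y) ->
    (forall x, x \in K -> p (phi x) = q x) ->
    0 < eps < 1 ->
    exists phie : H -> G,
      (forall x y, phie (x - y) = phie x - phie y) /\
      (forall x, x \in K -> p (phi x - phie x) <= eps) /\
      (forall x, (1 - eps) * q x <= p (phie x) <= (1 + eps) * q x).

Definition G3_property (R : realType) (N : nat) (G : zmodType) (p : G -> R) : Prop :=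
  N = 0%N -> forall x e, 0 < e ->
    exists y : G, (exists k, (0 < k)%N /\ y *+ k = 0) /\ p (x - y) < e.

(** (G,p) satisfies the characterization (G1)-(G3) of the group G_r(N). *)
Definition is_Gr (R : realType) (r : \bar R) (N : nat) (G : zmodType)
    (p : G -> R) : Prop :=
  (complete_value p /\ in_frakG r N p) /\ G2_property r N p /\ G3_property N p.

Definition is_metric (R : realType) (X : Type) (d : X -> X -> R) : Prop :=
  (forall x y, 0 <= d x y) /\
  (forall x y, d x y = 0 <-> x = y) /\
  (forall x y, d x y = d y x) /\
  (forall x y z, d x z <= d x y + d y z).

Definition separable_metric (R : realType) (X : Type) (d : X -> X -> R) : Prop :=
  exists D : set X, countable D /\
    forall x e, 0 < e -> exists y, D y /\ d x y < e.

(* Main.v *)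
Require Import Defs.
From HB Require Import structures.
From mathcomp Require Import all_boot all_order all_algebra.
From mathcomp Require Import all_classical all_reals all_analysis.
From mathcomp Require Import ring lra zify.
Set Implicit Arguments. Unset Strict Implicit. Unset Printing Implicit Defensive.
Import Order.TTheory GRing.Theory Num.Theory.
Import numFieldNormedType.Exports.
Local Open Scope ring_scope.

Section ValueLemmas.
Variables (R : realType) (G : zmodType) (p : G -> R).
Hypothesis pv : is_value p.

Lemma vge0 x : 0 <= p x. Proof. by case: pv. Qed.
Lemma v0 : p 0 = 0. Proof. by case: pv => _ [h _]; apply/(h 0). Qed.
Lemma veq0 x : p x = 0 -> x = 0. Proof. by case: pv => _ [h _]; exact: (proj1 (h x)). Qed.
Lemma vN x : p (- x) = p x. Proof. by case: pv => _ [_ [h _]]. Qed.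
Lemma vD x y : p (x + y) <= p x + p y. Proof. by case: pv => _ [_ [_ h]]. Qed.
Lemma vB x y : p (x - y) = p (y - x). Proof. by rewrite -vN opprB. Qed.
Lemma vBtr x y z : p (x - z) <= p (x - y) + p (y - z).
Proof. by have := vD (x - y) (y - z); rewrite addrA subrK. Qed.
Lemma vdist x y : `|p x - p y| <= p (x - y).
Proof.
rewrite ler_norml; have h1 := vD (y - x) x; have h2 := vD (x - y) y.
rewrite !subrK vB in h1 h2; apply/andP; split; lra.
Qed.
End ValueLemmas.

Section Trunc.
Variable R : realType.
Definition trunc (r : \bar R) (x : R) : R := if r is EFin c then Num.min c x else x.

Lemma trunc_id (r : \bar R) x : (x%:E <= r)%E -> trunc r x = x.
Proof. by case: r => //= c; rewrite lee_fin => h; rewrite /Num.min ltNge h. Qed.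

Lemma trunc_le (r : \bar R) x : trunc r x <= x.
Proof. by case: r => //= c; rewrite ge_min lexx orbT. Qed.

Lemma trunc_bound (r : \bar R) x : r = 1%E \/ r = +oo%E -> ((trunc r x)%:E <= r)%E.
Proof. by case=> ->; rewrite ?leey //= lee_fin ge_min lexx. Qed.

Lemma trunc_value (r : \bar R) (G : zmodType) (q : G -> R) :
  r = 1%E \/ r = +oo%E -> is_value q -> is_value (fun x => trunc r (q x)).
Proof.
move=> hr qv; case: hr => ->; last by [].
split; [|split; [|split]] => /=.
- by move=> x; rewrite le_min ler01 vge0.
- move=> x; split; last by move=> ->; rewrite v0 // /Num.min ltNge ler01.
  move=> h; apply: (veq0 qv); move: h; rewrite /Num.min.
  by case: ltP => // _ /eqP; rewrite oner_eq0.
- by move=> x; rewrite vN.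
- move=> x y; have h := vD qv x y; have hx := vge0 qv x; have hy := vge0 qv y.
  rewrite /Num.min; case: (ltP 1 (q (x + y))) => h1;
  case: (ltP 1 (q x)) => h2; case: (ltP 1 (q y)) => h3; lra.
Qed.
End Trunc.

Section MinF.
Variables (R : realType) (I : finType) (i0 : I) (F : I -> R).
Definition minF := F (Order.arg_min i0 xpredT F).
Lemma minF_le j : minF <= F j.
Proof. by rewrite /minF; case: (arg_minP F (isT : xpredT i0)) => i _ /(_ j isT). Qed.
Lemma minF_ex : exists j, minF = F j.
Proof. by exists (Order.arg_min i0 xpredT F). Qed.
End MinF.

Section Prod.
Variables A B : finZmodType.
Definition AB := (A * B)%type.
HB.instance Definition _ := GRing.Zmodule.on AB.
HB.instance Definition _ := Finite.on AB.
End Prod.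

Lemma pair_mulrn (A B : zmodType) (x : A) (y : B) n :
  ((x, y) : (A * B)%type) *+ n = (x *+ n, y *+ n).
Proof. by elim: n => // n IH; rewrite !mulrS IH. Qed.

Lemma addmorph (U W : zmodType) (f : U -> W) : (forall x y, f (x - y) = f x - f y) ->
  [/\ f 0 = 0, (forall x, f (- x) = - f x) & (forall x y, f (x + y) = f x + f y)].
Proof.
move=> h; have h0 : f 0 = 0 by rewrite -(subrr 0) h subrr.
have hN x : f (- x) = - f x by rewrite -sub0r h h0 sub0r.
split; [exact: h0 | exact: hN | move=> x y; by rewrite -{1}(opprK y) h hN opprK].
Qed.

Section Step.
Variables (R : realType) (r : \bar R) (N : nat) (G : zmodType) (p : G -> R).
Hypotheses (hr : r = 1%E \/ r = +oo%E) (pv : is_value p) (pb : bounded_by p r)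
  (hG2 : G2_property r N p).
Variables (A B : finZmodType) (VA : A -> R) (VB : B -> R) (iota : A -> B)
  (psi : A -> G) (e e2 : R).
Hypotheses (VAv : is_value VA) (VBv : is_value VB) (VBb : bounded_by VB r)
  (expA : exponent_cond A N) (expB : exponent_cond B N)
  (iotaB : forall x y, iota (x - y) = iota x - iota y)
  (iotaV : forall z, VB (iota z) = VA z)
  (psiB : forall x y, psi (x - y) = psi x - psi y)
  (psiV : forall x, (1 - e) * VA x <= p (psi x) <= (1 + e) * VA x)
  (e01 : 0 < e < 1) (e201 : 0 < e2 < 1).

Let cost (u : AB A B) (z : A) := p (psi (u.1 - z)) + VB (u.2 + iota z) + e * VA z.
Let Q0 (u : AB A B) := minF 0 (cost u).
Let Q (u : AB A B) := trunc r (Q0 u).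

Let i0 : iota 0 = 0. Proof. by have [h _ _] := addmorph iotaB. Qed.
Let iN x : iota (- x) = - iota x. Proof. by have [_ h _] := addmorph iotaB. Qed.
Let iD x y : iota (x + y) = iota x + iota y. Proof. by have [_ _ h] := addmorph iotaB. Qed.
Let s0 : psi 0 = 0. Proof. by have [h _ _] := addmorph psiB. Qed.
Let sN x : psi (- x) = - psi x. Proof. by have [_ h _] := addmorph psiB. Qed.
Let sD x y : psi (x + y) = psi x + psi y. Proof. by have [_ _ h] := addmorph psiB. Qed.

Let cost_ge0 u z : 0 <= cost u z.
Proof.
rewrite /cost; have := vge0 pv (psi (u.1 - z)); have := vge0 VBv (u.2 + iota z).
have := vge0 VAv z; case/andP: e01 => e0 _; move=> h1 h2 h3.
by rewrite addr_ge0 // ?addr_ge0 // mulr_ge0 // ltW.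
Qed.

Let Q0v : is_value Q0.
Proof.
have c0 : forall u, Q0 u <= cost u 0 by move=> u; exact: minF_le.
have Q0ge0 : forall u, 0 <= Q0 u by move=> u; rewrite /Q0; case: (minF_ex 0 (cost u)) => z ->.
case/andP: e01 => e0 e1.
split; [|split; [|split]] => //.
- move=> u; split; last first.
    move=> ->; apply/le_anti; rewrite Q0ge0 andbT.
    apply: (le_trans (c0 0)); rewrite /cost.
    have -> : (0 : AB A B).1 = 0 by [].
    have -> : (0 : AB A B).2 = 0 by [].
    by rewrite subr0 i0 addr0 s0 (v0 pv) (v0 VBv) (v0 VAv) mulr0 !addr0.
  rewrite /Q0; case: (minF_ex 0 (cost u)) => z ->; rewrite /cost => hc.
  have h1 := vge0 pv (psi (u.1 - z)); have h2 := vge0 VBv (u.2 + iota z).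
  have h3 : 0 <= e * VA z by apply: mulr_ge0; [exact: ltW | exact: vge0].
  have a : p (psi (u.1 - z)) = 0 by lra.
  have b : VB (u.2 + iota z) = 0 by lra.
  have /eqP : e * VA z = 0 by lra.
  rewrite mulf_eq0 gt_eqF //= => /eqP c.
  have z0 := veq0 VAv c; rewrite z0 subr0 i0 addr0 in a b.
  have u20 := veq0 VBv b.
  have := psiV u.1; rewrite a => /andP[h _].
  have hu : VA u.1 = 0.
    apply/le_anti; rewrite vge0 // andbT.
    by move: h; rewrite pmulr_rle0 // subr_gt0.
  by case: u u20 hu {a b h h1 h2 hc} => x y /= -> /(veq0 VAv) ->.
- move=> u.
  have key : forall v, Q0 (- v) <= Q0 v.
    move=> v; rewrite /Q0; case: (minF_ex 0 (cost v)) => z ->.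
    apply: (le_trans (minF_le _ _ (- z))); rewrite /cost.
    have -> : (- v).1 = - v.1 by [].
    have -> : (- v).2 = - v.2 by [].
    by rewrite -opprD sN (vN pv) iN -opprD (vN VBv) (vN VAv).
  by apply/le_anti; rewrite key /= -{1}(opprK u) key.
- move=> u v; rewrite /Q0.
  case: (minF_ex 0 (cost u)) => z1 ->; case: (minF_ex 0 (cost v)) => z2 ->.
  apply: (le_trans (minF_le _ _ (z1 + z2))); rewrite /cost.
  have -> : (u + v).1 = u.1 + v.1 by [].
  have -> : (u + v).2 = u.2 + v.2 by [].
  have a1 := vD pv (psi (u.1 - z1)) (psi (v.1 - z2)).
  have a2 := vD VBv (u.2 + iota z1) (v.2 + iota z2).
  have a3 := vD VAv z1 z2.
  rewrite -sD addrACA -opprD in a1; rewrite addrACA -iD in a2.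
  have : e * VA (z1 + z2) <= e * VA z1 + e * VA z2 by rewrite -mulrDr ler_wpM2l // ltW.
  lra.
Qed.

Lemma step_lemma : exists psi' : B -> G,
  [/\ (forall x y, psi' (x - y) = psi' x - psi' y),
      (forall y, (1 - e2) * VB y <= p (psi' y) <= (1 + e2) * VB y) &
      (forall z, p (psi' (iota z) - psi z) <= (1 + e2) * (e * VA z) + e2)].
Proof.
have Qv : is_value Q by exact: (trunc_value hr Q0v).
have Qb : bounded_by Q r by move=> u; exact: trunc_bound.
have expH : exponent_cond (AB A B) N.
  by move=> hN [x y]; rewrite pair_mulrn expA // expB.
pose K := [set u : AB A B | u.2 == 0].
have Ksub : is_subgroup K.
  split; first by rewrite inE.
  move=> x y; rewrite !inE => /eqP hx /eqP hy.
  by rewrite -[(x - y).2]/(x.2 - y.2) hx hy subrr.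
pose phi := fun u : AB A B => psi u.1.
have phiB : forall x y, x \in K -> y \in K -> phi (x - y) = phi x - phi y.
  by move=> x y _ _; rewrite /phi -psiB.
have Q0K : forall u : AB A B, u.2 = 0 -> Q0 u = p (psi u.1).
  move=> u hu; apply/le_anti/andP; split.
    apply: (le_trans (minF_le _ _ 0)); rewrite /cost hu subr0 i0 addr0 (v0 VBv).
    by rewrite (v0 VAv) mulr0 !addr0.
  rewrite /Q0; case: (minF_ex 0 (cost u)) => z ->; rewrite /cost hu add0r iotaV.
  have h1 := vD pv (psi (u.1 - z)) (psi z); rewrite -sD subrK in h1.
  have := psiV z => /andP[_ h2]; lra.
have phiV : forall x, x \in K -> p (phi x) = Q x.
  move=> u; rewrite inE => /eqP hu; rewrite /phi /Q Q0K // trunc_id //.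
have [phie [phieB [phieK phieV]]] := hG2 Qv Qb expH Ksub phiB phiV e201.
have phie0 : phie 0 = 0 by rewrite -(subrr (0 : AB A B)) phieB subrr.
have Q0B : forall y : B, Q0 (0, y) = VB y.
  move=> y; apply/le_anti/andP; split.
    apply: (le_trans (minF_le _ _ 0)); rewrite /cost /= subr0 i0 addr0 s0 (v0 pv).
    by rewrite (v0 VAv) mulr0 add0r addr0.
  rewrite /Q0; case: (minF_ex 0 (cost (0, y))) => z ->; rewrite /cost /= sub0r sN (vN pv).
  have h1 := vD VBv (y + iota z) (- iota z); rewrite addrK (vN VBv) iotaV in h1.
  have := psiV z => /andP[h2 _]; lra.
exists (fun y => phie (0, y)); split.
- move=> x y; rewrite -phieB; congr phie.
  by rewrite -[in LHS](subrr (0 : A)).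
- move=> y; have := phieV (0, y); rewrite /Q Q0B trunc_id //.
- move=> z.
  apply: (le_trans (vBtr pv _ (phie (z, 0)) _)).
  have h2 : p (phie (z, 0) - psi z) <= e2.
    rewrite vB //; have := phieK (z, 0); rewrite inE eqxx; exact.
  have h1 : p (phie (0, iota z) - phie (z, 0)) <= (1 + e2) * (e * VA z).
    rewrite -phieB; have := phieV ((0, iota z) - (z, 0)) => /andP[_].
    move/le_trans; apply; apply: ler_wpM2l; first by case/andP: e201 => ? ?; lra.
    apply: (le_trans (trunc_le _ _)); apply: (le_trans (minF_le _ _ (- z))).
    rewrite /cost /= sub0r opprK addNr iN subr0 addrN s0 (v0 pv) (v0 VBv) (vN VAv).
    by rewrite !add0r.
  lra.
Qed.
End Step.

Section Geom.
Variable R : realType.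
Definition hh (n : nat) : R := ((2:R) ^+ n)^-1.
Lemma hh_gt0 n : 0 < hh n. Proof. by rewrite /hh invr_gt0 exprn_gt0. Qed.
Lemma hhS n : hh n.+1 = hh n / 2.
Proof. by rewrite /hh exprS invfM mulrC. Qed.
Lemma hh_le1 n : hh n <= 1.
Proof. by rewrite /hh invf_le1 ?exprn_gt0 // exprn_ege1 // ler1n. Qed.
Lemma hh_small (eps : R) : 0 < eps -> exists M, forall n, (M <= n)%N -> hh n < eps.
Proof.
move=> e0; set M := Num.Def.archi_bound (eps^-1).
have hM : eps^-1 < M%:R by apply: archi_boundP; rewrite invr_ge0 ltW.
exists M => n hn; rewrite /hh.
have h2 : (n.+1)%:R <= (2:R) ^+ n.
  by rewrite -natrX ler_nat; exact: ltn_expl.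
have hn' : eps^-1 < (2:R) ^+ n.
  apply: (lt_le_trans hM); apply: le_trans h2; rewrite ler_nat; exact: leqW.
by rewrite -(invrK eps) ltf_pV2 ?posrE ?exprn_gt0 ?invr_gt0.
Qed.
End Geom.

Lemma hh_anti (R : realType) n m : (n <= m)%N -> hh R m <= hh R n.
Proof.
move=> /subnK <-; elim: (m - n)%N => [|k IH]; first by rewrite add0n.
rewrite addSn hhS; apply: le_trans IH; rewrite ler_pdivrMr // ler_peMr //.
  exact: ltW (hh_gt0 _ _).
by rewrite ler1n.
Qed.

Lemma close_eq (R : realType) (x y c : R) : 0 <= c ->
  (forall eps, 0 < eps -> `|x - y| <= c * eps) -> x = y.
Proof.
move=> c0 h; apply/eqP; rewrite -subr_eq0; apply/negPn/negP => hne.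
have d0 : 0 < `|x - y| by rewrite normr_gt0.
have c1 : 0 < c + 1 by rewrite ltr_wpDl.
have H := h (`|x - y| / (c + 1)) (divr_gt0 d0 c1).
have hlt : c * (`|x - y| / (c + 1)) < `|x - y|.
  by rewrite mulrA ltr_pdivrMr // mulrC ltr_pM2l // ltrDl ltr01.
lra.
Qed.

Section Cauchy.
Variables (R : realType) (G : zmodType) (p : G -> R).
Hypotheses (pv : is_value p) (hcomp : complete_value p).

Lemma geo_cauchy (w : nat -> G) (C : R) : 0 < C ->
  (forall k, p (w k.+1 - w k) <= C * (hh R k / 2)) ->
  exists l, forall eps, 0 < eps -> exists M, forall n, (M <= n)%N -> p (w n - l) < eps.
Proof.
move=> C0 hw.
have tel : forall n m, (n <= m)%N -> p (w m - w n) <= C * (hh R n - hh R m).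
  move=> n m /subnK <-; elim: (m - n)%N => [|k IH].
    by rewrite add0n subrr (v0 pv) subrr mulr0.
  rewrite addSn; apply: (le_trans (vBtr pv _ (w (k + n)%N) _)).
  have := hw (k + n)%N; rewrite hhS; lra.
apply: hcomp => eps e0.
have [M hM] := hh_small (divr_gt0 e0 C0).
exists M => m n hm hn.
wlog hnm : m n hm hn / (n <= m)%N.
  move=> hwlog; case: (leqP n m) => h; first exact: hwlog.
  rewrite vB //; apply: hwlog => //; exact: ltnW.
apply: (le_lt_trans (tel _ _ hnm)).
have := hM n hn; rewrite ltr_pdivlMr // => h.
have := hh_gt0 R m; have : C * (hh R n - hh R m) <= C * hh R n.
  by rewrite ler_pM2l // gerDl oppr_le0 ltW // hh_gt0.
lra.
Qed.
End Cauchy.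

Lemma subsub (Z : zmodType) (x y a b : Z) : x - y - (a - b) = (x - a) + (b - y).
Proof. by rewrite opprB !addrA [x - y + b]addrAC [x - a + b]addrAC [LHS]addrAC. Qed.

Unset Implicit Arguments.
Section Tower.
Variables (R : realType) (r : \bar R) (N : nat) (G : zmodType) (p : G -> R).
Hypotheses (hr : r = 1%E \/ r = +oo%E) (pv : is_value p) (pb : bounded_by p r)
  (hG2 : G2_property r N p) (hcomp : complete_value p).
Variables (F : nat -> finZmodType) (V : forall n, F n -> R)
  (incl : forall n, F n -> F n.+1) (pt : forall n, nat -> F n) (D : nat -> nat -> R).
Hypotheses (Vv : forall n, is_value (V n)) (Vb : forall n, bounded_by (V n) r)
  (Fexp : forall n, exponent_cond (F n) N)
  (inclB : forall n x y, incl n (x - y) = incl n x - incl n y)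
  (inclV : forall n z, V n.+1 (incl n z) = V n z)
  (ptincl : forall n i, (i <= n)%N -> incl n (pt n i) = pt n.+1 i)
  (pt0 : forall n, pt n 0 = 0)
  (ptD : forall n i j, (i <= n)%N -> (j <= n)%N -> V n (pt n i - pt n j) = D i j).

Let e n : R := hh R n.+1.
Let Inv n (psi : F n -> G) := (forall x y, psi (x - y) = psi x - psi y) /\
  (forall x, (1 - e n) * V n x <= p (psi x) <= (1 + e n) * V n x).

Let e01 n : 0 < e n < 1.
Proof.
rewrite /e hh_gt0 /= hhS; have := hh_le1 R n; have := hh_gt0 R n; lra.
Qed.

Let base : exists psi, Inv 0 psi.
Proof.
have Ks : is_subgroup [set (0 : F 0)].
  by split; [rewrite inE | move=> x y; rewrite !inE => /eqP -> /eqP ->; rewrite subrr].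
have phiB : forall x y : F 0, x \in [set 0] -> y \in [set 0] ->
    (fun _ => (0 : G)) (x - y) = (fun _ => 0) x - (fun _ => 0) y by move=> *; rewrite subrr.
have phiV : forall x : F 0, x \in [set 0] -> p ((fun _ => (0:G)) x) = V 0 x.
  by move=> x; rewrite inE => /eqP ->; rewrite (v0 pv) (v0 (Vv 0)).
have [phie [h1 [_ h3]]] := hG2 (F 0) (V 0) [set 0] (fun _ => 0) (e 0) (Vv 0) (Vb 0) (Fexp 0) Ks phiB phiV (e01 0).
by exists phie.
Qed.

Let stepI n psi : Inv n psi -> exists psi', Inv n.+1 psi' /\
  forall z, p (psi' (incl n z) - psi z) <= (1 + e n.+1) * (e n * V n z) + e n.+1.
Proof.
move=> [h1 h2].
have [psi' [a b c]] := step_lemma hr pv pb hG2 (Vv n) (Vv n.+1) (Vb n.+1) (Fexp n)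
  (Fexp n.+1) (inclB n) (inclV n) h1 h2 (e01 n) (e01 n.+1).
by exists psi'.
Qed.

Lemma tower : exists gam : nat -> G, forall i j, p (gam i - gam j) = D i j.
Proof.
pose T n := {psi : F n -> G | Inv n psi}.
have stp : forall n (s : T n), {psi' : F n.+1 -> G | Inv n.+1 psi' /\
   forall z, p (psi' (incl n z) - sval s z) <= (1 + e n.+1) * (e n * V n z) + e n.+1}.
  by move=> n s; apply: cid; exact: stepI (svalP s).
pose S := fix S (n : nat) : T n := match n return T n with
  | 0 => cid base
  | k.+1 => let t := stp k (S k) in exist _ (sval t) (proj1 (svalP t)) end.
pose psi n := sval (S n).
have Sinv n : Inv n (psi n) by exact: (svalP (S n)).
have Smov n z : p (psi n.+1 (incl n z) - psi n z) <=
    (1 + e n.+1) * (e n * V n z) + e n.+1.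
  exact: (proj2 (svalP (stp n (S n))) z).
pose w i n := psi n (pt n i).
have Dge0 i j : 0 <= D i j by rewrite -(ptD (i + j) i j) ?leq_addr ?leq_addl // vge0.
have mov i k : p (w i (k.+1 + i)%N - w i (k + i)%N) <= (2 * D i 0 + 1) * (hh R k / 2).
  rewrite /w addSn -ptincl ?leq_addl //.
  apply: (le_trans (Smov _ _)).
  rewrite -[pt _ i](subr0) -(pt0 (k + i)) ptD ?leq_addl //.
  have h1 : e (k + i).+1 <= e (k + i) by apply: hh_anti.
  have h2 : e (k + i) <= hh R k / 2 by rewrite -hhS; apply: hh_anti; rewrite ltnS leq_addr.
  have h3 := e01 (k + i).+1; have h4 := e01 (k + i); have h5 := Dge0 i 0.
  have h6 : e (k + i) * D i 0 <= hh R k / 2 * D i 0 by rewrite ler_wpM2r.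
  have h7 : (1 + e (k + i).+1) * (e (k + i) * D i 0) <= 2 * (e (k + i) * D i 0).
    rewrite ler_wpM2r //; first by rewrite mulr_ge0 // ltW //; case/andP: h4.
    by case/andP: h3 => _ h; lra.
  lra.
have lim i : exists l, forall eps, 0 < eps -> exists M, forall n, (M <= n)%N ->
    p (w i n - l) < eps.
  have C0 : 0 < 2 * D i 0 + 1 by have := Dge0 i 0; lra.
  have [l hl] := geo_cauchy pv hcomp C0 (mov i).
  exists l => eps e0; have [M hM] := hl eps e0; exists (M + i)%N => n hn.
  have -> : n = (n - i + i)%N by rewrite subnK // (leq_trans (leq_addl _ _) hn).
  by apply: hM; rewrite leq_subRL ?(leq_trans (leq_addl _ _) hn) // addnC.
have [gam hgam] := choice lim.
exists gam => i j.
apply: (@close_eq _ _ _ (2 + D i j)); first by have := Dge0 i j; lra.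
move=> eps e0.
have [Mi hMi] := hgam i eps e0; have [Mj hMj] := hgam j eps e0.
have [M hM] := hh_small e0.
pose n := (Mi + Mj + M + i + j)%N.
have hi := hMi n (ltac:(rewrite /n; lia)).
have hj := hMj n (ltac:(rewrite /n; lia)).
have hn := hM n (ltac:(rewrite /n; lia)).
have hen : e n <= hh R n by apply: hh_anti.
have [psiB psiV] := Sinv n.
have hD := psiV (pt n i - pt n j).
have e1 : psi n (pt n i - pt n j) = psi n (pt n i) - psi n (pt n j) by exact: psiB.
have e2 : V n (pt n i - pt n j) = D i j by apply: ptD; rewrite /n; lia.
rewrite e1 e2 in hD.
have hd := vdist pv (gam i - gam j) (w i n - w j n).
rewrite subsub in hd.
have hs := vD pv (gam i - w i n) (w j n - gam j).
rewrite (vB pv (gam i)) in hs.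
have hDij := Dge0 i j.
have hee : e n * D i j <= eps * D i j by rewrite ler_wpM2r //; apply: (le_trans hen); exact: ltW.
rewrite /w in hi hj hd hs hD.
move: hd; set P := p (gam i - gam j); set Qn := p (psi n (pt n i) - psi n (pt n j)).
move: hD; rewrite -/Qn => /andP[hD1 hD2] hd.
rewrite ler_norml; rewrite ler_norml in hd; case/andP: hd => hd1 hd2.
apply/andP; split; lra.
Qed.
End Tower.
Set Implicit Arguments.

Section Meas.
Variable R : realType.
Local Open Scope classical_set_scope.

Lemma meas_lt (a : R) (b : bool) : measurable [set t : R | (t < a) = b].
Proof.
case: b.
  have -> : [set t : R | (t < a) = true] = `]-oo, a[%classic.
    by rewrite set_itvNyo; apply/seteqP; split => t /= ->.
  exact: measurable_itv.
have -> : [set t : R | (t < a) = false] = `[a, +oo[%classic.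
  rewrite set_itvcy; apply/seteqP; split => t /=; first by move/negbT; rewrite -leNgt.
  by rewrite leNgt => /negbTE.
exact: measurable_itv.
Qed.

Lemma meas_fin n (u : 'I_n -> R) (P : {ffun 'I_n -> bool} -> bool -> bool) :
  measurable [set t : R | P [ffun l => t < u l] (t < 0)].
Proof.
have -> : [set t : R | P [ffun l => t < u l] (t < 0)] =
  \bigcup_(vb in [set vb : {ffun 'I_n -> bool} * bool | P vb.1 vb.2])
     ((\bigcap_(l in [set: 'I_n]) [set t : R | (t < u l) = vb.1 l]) `&`
      [set t : R | (t < 0) = vb.2]).
  apply/seteqP; split => t /=.
    move=> Pt; exists ([ffun l => t < u l], t < 0) => //=.
    by split => // l _ /=; rewrite ffunE.
  move=> [[v b] /= Pvb [ht hb]]; rewrite hb.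
  have -> : [ffun l => t < u l] = v by apply/ffunP => l; rewrite ffunE; exact: ht.
  exact: Pvb.
apply: fin_bigcup_measurable; first exact: finite_finset.
move=> vb _; apply: measurableI; last exact: meas_lt.
apply: fin_bigcap_measurable; first exact: finite_finset.
by move=> l _; exact: meas_lt.
Qed.
End Meas.

Section Free.
Variables (R : realType) (X : Type) (d : X -> X -> R) (e : nat -> X) (m : nat).
Hypotheses (hd : is_metric d) (hm : (1 < m)%N).
Local Open Scope classical_set_scope.

Let d_ge0 x y : 0 <= d x y. Proof. by case: hd. Qed.
Let d_xx x : d x x = 0. Proof. by case: hd => _ [h _]; apply/(h x x). Qed.
Let d_eq0 x y : d x y = 0 -> x = y. Proof. by case: hd => _ [h _]; exact: (proj1 (h x y)). Qed.
Let d_sym x y : d x y = d y x. Proof. by case: hd => _ [_ [h _]]. Qed.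
Let d_tri x y z : d x z <= d x y + d y z. Proof. by case: hd => _ [_ [_ h]]. Qed.

Let foex i : exists j, `[< e j = e i >].
Proof. by exists i; apply/asboolP. Qed.
Definition fo i := ex_minn (foex i).

Lemma foP i : [/\ e (fo i) = e i, (fo i <= i)%N & forall j, e j = e i -> (fo i <= j)%N].
Proof.
rewrite /fo; case: ex_minnP => j /asboolP hj hmin; split => //.
  by apply: hmin; apply/asboolP.
by move=> k hk; apply: hmin; apply/asboolP.
Qed.

Lemma fo_eq i j : e i = e j -> fo i = fo j.
Proof.
move=> hij; case: (foP i) => hi _ mi; case: (foP j) => hj _ mj.
have a : (fo i <= fo j)%N by apply: mi; rewrite hj hij.
have b : (fo j <= fo i)%N by apply: mj; rewrite hi.
by apply/eqP; rewrite eqn_leq a b.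
Qed.

Lemma fo_fo i : fo (fo i) = fo i.
Proof. by apply: fo_eq; case: (foP i). Qed.

Lemma fo0 : fo 0 = 0%N.
Proof. by case: (foP 0) => _; rewrite leqn0 => /eqP. Qed.

Definition pres (l : nat) := fo l.+1 == l.+1.

Lemma pres_inj l l' : pres l -> pres l' -> e l.+1 = e l'.+1 -> l = l'.
Proof. by move=> /eqP h /eqP h' /fo_eq; rewrite h h' => -[]. Qed.

Lemma pres_ne0 l : pres l -> e l.+1 <> e 0.
Proof. by move=> /eqP h /fo_eq; rewrite fo0 h. Qed.

Definition ff k j := d (e j) (e k) - d (e 0) (e k).

Lemma ff_bound k j : `|ff k j| <= d (e j) (e 0).
Proof.
rewrite /ff ler_norml; have h1 := d_tri (e j) (e 0) (e k).
have h2 := d_tri (e 0) (e j) (e k); rewrite (d_sym (e 0) (e j)) in h2.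
apply/andP; split; lra.
Qed.

Lemma ff_fo k i : ff k (fo i) = ff k i.
Proof. by rewrite /ff; case: (foP i) => ->. Qed.

Lemma ff0 k : ff k 0 = 0. Proof. by rewrite /ff subrr. Qed.

Definition Fg n := {ffun 'I_n -> 'Z_m}.
HB.instance Definition _ n := GRing.Zmodule.on (Fg n).
HB.instance Definition _ n := Finite.on (Fg n).

Definition cutv n k t (c : Fg n) : 'Z_m :=
  \sum_(l < n | pres l && (t < ff k l.+1)) c l -
  (if t < 0 then \sum_(l < n | pres l) c l else 0).

Lemma cutvB n k t (c c' : Fg n) : cutv k t (c - c') = cutv k t c - cutv k t c'.
Proof.
rewrite /cutv.
rewrite (eq_bigr (fun l => c l - c' l)) => [|l _]; last by rewrite !ffunE.
rewrite sumrB.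
rewrite [X in (if _ then X else _)](eq_bigr (fun l => c l - c' l)) => [|l _]; last by rewrite !ffunE.
by rewrite sumrB; case: (t < 0); ring.
Qed.

Lemma cutv0 n k t : cutv k t (0 : Fg n) = 0.
Proof. by rewrite -(subrr (0 : Fg n)) cutvB subrr. Qed.

Lemma cutvN n k t (c : Fg n) : cutv k t (- c) = - cutv k t c.
Proof. by rewrite -sub0r cutvB cutv0 sub0r. Qed.

Lemma cutvD n k t (c c' : Fg n) : cutv k t (c + c') = cutv k t c + cutv k t c'.
Proof.
have -> : c + c' = c - (- c') by rewrite opprK.
by rewrite cutvB cutvN opprK.
Qed.

Definition Eset n k (c : Fg n) := [set t : R | cutv k t c != 0].

Lemma Eset_meas n k (c : Fg n) : measurable (Eset k c).
Proof.
pose P (v : {ffun 'I_n -> bool}) (b : bool) :=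
  (\sum_(l < n | pres l && v l) c l - (if b then \sum_(l < n | pres l) c l else 0)) != 0.
have -> : Eset k c = [set t : R | P [ffun l : 'I_n => t < ff k l.+1] (t < 0)].
  have hP : forall t, P [ffun l : 'I_n => t < ff k l.+1] (t < 0) = (cutv k t c != 0).
    move=> t; rewrite /P /cutv; do 3 f_equal; apply: eq_bigl => l; by rewrite ffunE.
  by apply/seteqP; split => t; rewrite /Eset /= hP.
exact: meas_fin.
Qed.

Definition Bn n := \sum_(l < n) d (e l.+1) (e 0).

Lemma Bn_ge0 n : 0 <= Bn n. Proof. by apply: sumr_ge0 => l _; apply: d_ge0. Qed.

Lemma Bn_term n (l : 'I_n) : d (e l.+1) (e 0) <= Bn n.
Proof. by rewrite /Bn (bigD1 l) //= lerDl sumr_ge0. Qed.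

Lemma Eset_sub n k (c : Fg n) : Eset k c `<=` `[- Bn n, Bn n[%classic.
Proof.
move=> t; rewrite /Eset /= in_itv /= => hpi; apply/andP; split.
  rewrite leNgt; apply/negP => ht; move: hpi; rewrite /cutv.
  have t0 : t < 0 by apply: (lt_le_trans ht); rewrite oppr_le0 Bn_ge0.
  rewrite t0 (eq_bigl (fun l : 'I_n => pres l)) ?subrr ?eqxx // => l.
  case: (pres l) => //=; apply: (lt_le_trans ht).
  have := ff_bound k l.+1; rewrite ler_norml => /andP[h _].
  by apply: le_trans h; rewrite lerN2; apply: Bn_term.
rewrite ltNge; apply/negP => ht; move: hpi; rewrite /cutv.
have t0 : ~~ (t < 0) by rewrite -leNgt (le_trans (Bn_ge0 n)).
rewrite (negbTE t0) big_pred0 ?subrr ?eqxx // => l.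
apply/negbTE; rewrite negb_and; apply/orP; right; rewrite -leNgt.
apply: le_trans ht; apply: le_trans (Bn_term l).
by have := ff_bound k l.+1; rewrite ler_norml => /andP[_ h].
Qed.

Lemma leb_mono (A B : set R) : measurable A -> measurable B -> A `<=` B ->
  (lebesgue_measure A <= lebesgue_measure B)%E.
Proof. by move=> mA mB AB; apply: le_measure => //; rewrite inE. Qed.

Definition Psi n k (c : Fg n) : R := fine (lebesgue_measure (Eset k c)).

Lemma lebE n k (c : Fg n) : lebesgue_measure (Eset k c) = (Psi k c)%:E.
Proof.
rewrite /Psi fineK // ge0_fin_numE ?measure_ge0 //.
apply: (le_lt_trans (leb_mono (@Eset_meas n k c) (measurable_itv _) (@Eset_sub n k c))).
by rewrite lebesgue_measure_itv /=; case: ifP => _; rewrite ?ltry.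
Qed.

Lemma Psi_ge0 n k (c : Fg n) : 0 <= Psi k c.
Proof. by rewrite -lee_fin -lebE measure_ge0. Qed.

Lemma Psi_le n k (c : Fg n) : Psi k c <= 2 * Bn n.
Proof.
rewrite -lee_fin -lebE.
apply: (le_trans (leb_mono (@Eset_meas n k c) (measurable_itv _) (@Eset_sub n k c))).
rewrite lebesgue_measure_itv /=; case: ifP => _; last by rewrite lee_fin mulr_ge0 ?Bn_ge0.
by rewrite -EFinD lee_fin opprK; lra.
Qed.

Lemma PsiD n k (c c' : Fg n) : Psi k (c + c') <= Psi k c + Psi k c'.
Proof.
rewrite -lee_fin EFinD -!lebE.
apply: le_trans (measureU2 lebesgue_measure (@Eset_meas n k c) (@Eset_meas n k c')).
apply: leb_mono; [exact: Eset_meas | by apply: measurableU; exact: Eset_meas | ].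
move=> t; rewrite /Eset /= cutvD => h.
case: (eqVneq (cutv k t c) 0) => hc; last by left.
by right; move: h; rewrite hc add0r.
Qed.

Lemma PsiN n k (c : Fg n) : Psi k (- c) = Psi k c.
Proof.
rewrite /Psi; congr (fine (lebesgue_measure _)).
by apply/seteqP; split => t; rewrite /Eset /= cutvN oppr_eq0.
Qed.

Lemma Psi0 n k : Psi k (0 : Fg n) = 0.
Proof.
rewrite /Psi (_ : Eset k 0 = set0) ?measure0 //.
by apply/seteqP; split => t; rewrite /Eset /= cutv0 eqxx.
Qed.

Definition pt n i : Fg n := [ffun l : 'I_n => (((fo i != 0%N) && (val l == (fo i).-1)) : nat)%:R].

Lemma pt0 n : pt n 0 = 0.
Proof. by apply/ffunP => l; rewrite !ffunE fo0. Qed.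

Lemma sum_single n (P : pred 'I_n) (s : 'I_n) (F : 'I_n -> 'Z_m) :
  (forall l, l != s -> F l = 0) -> \sum_(l < n | P l) F l = if P s then F s else 0.
Proof.
move=> h; rewrite big_mkcond (bigD1 s) //= big1 ?addr0 // => l hl.
by rewrite h // if_same.
Qed.

Lemma cutv_pt n k t i : (i <= n)%N ->
  cutv k t (pt n i) = ((t < ff k i)%R : nat)%:R - ((t < 0)%R : nat)%:R.
Proof.
move=> hi; case: (posnP (fo i)) => hfo.
  have -> : pt n i = 0 by apply/ffunP => l; rewrite !ffunE hfo.
  by rewrite cutv0 -ff_fo hfo ff0 subrr.
have hs : ((fo i).-1 < n)%N.
  by case: (foP i) => _ h _; rewrite prednK //; apply: leq_trans h hi.
pose s := Ordinal hs.
have ps : pres s by rewrite /pres /= prednK // fo_fo.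
have hF : forall l : 'I_n, l != s -> pt n i l = 0.
  move=> l hl; rewrite ffunE.
  have -> : (val l == (fo i).-1) = false.
    by apply/negP => /eqP h; case/eqP: hl; exact: val_inj.
  by rewrite andbF.
rewrite /cutv (sum_single _ hF) (sum_single _ hF) /= ps /= !ffunE eqxx -lt0n hfo /= prednK // ff_fo.
by case: (t < ff k i); case: (t < 0).
Qed.

Lemma cutv_ptB n k t i j : (i <= n)%N -> (j <= n)%N ->
  cutv k t (pt n i - pt n j) = ((t < ff k i)%R : nat)%:R - ((t < ff k j)%R : nat)%:R.
Proof. by move=> hi hj; rewrite cutvB !cutv_pt //; ring. Qed.

Lemma Eset_ptB n k i j : (i <= n)%N -> (j <= n)%N -> (ff k j <= ff k i) ->
  Eset k (pt n i - pt n j) = `[ff k j, ff k i[%classic.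
Proof.
move=> hi hj hle; apply/seteqP; split => t; rewrite /Eset /= cutv_ptB // in_itv /=.
  case: (ltP t (ff k i)) => hti; case: (ltP t (ff k j)) => htj /=.
  - by rewrite subrr eqxx.
  - by [].
  - by move=> _; exfalso; lra.
  - by rewrite subrr eqxx.
case/andP => h1 h2; rewrite h2 (negbTE _ : (t < ff k j) = false) -?leNgt //=.
by rewrite subr0 oner_neq0.
Qed.

Lemma Psi_ptB n k i j : (i <= n)%N -> (j <= n)%N ->
  Psi k (pt n i - pt n j) = `|ff k i - ff k j|.
Proof.
move=> hi hj.
wlog hle : i j hi hj / ff k j <= ff k i.
  move=> hw; case: (leP (ff k j) (ff k i)) => h; first exact: hw.
  rewrite -PsiN opprB distrC; apply: hw => //; exact: ltW.
rewrite /Psi Eset_ptB // lebesgue_measure_itv /= lte_fin.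
rewrite ger0_norm ?subr_ge0 //; case: ltP => h /=; first by [].
have -> : ff k i = ff k j by apply/le_anti; rewrite h hle.
by rewrite subrr.
Qed.

Lemma lb_exists (I : finType) (P : pred I) (F : I -> R) (a : R) : 0 < a ->
  (forall i, P i -> 0 < F i) ->
  exists mu, [/\ 0 < mu, mu <= a & forall i, P i -> mu <= F i].
Proof.
move=> a0 hF.
suff [mu [h1 h2 h3]] : exists mu, [/\ 0 < mu, mu <= a &
    forall i, i \in enum I -> P i -> mu <= F i].
  by exists mu; split => // i; apply: h3; rewrite mem_enum.
elim: (enum I) => [|x s [mu [h1 h2 h3]]]; first by exists a; split.
case: (boolP (P x)) => Px.
  exists (Num.min mu (F x)); split.
  - by rewrite lt_min h1 hF.
  - by rewrite ge_min h2.
  - move=> i; rewrite inE => /orP[/eqP -> _|hi Pi]; first by rewrite ge_min lexx orbT.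
    by rewrite ge_min h3.
exists mu; split => // i; rewrite inE => /orP[/eqP -> Pi|hi Pi]; last exact: h3.
by rewrite Pi in Px.
Qed.

Lemma Psi_pos n (c : Fg n) (l : 'I_n) : pres l -> c l != 0 -> exists k, 0 < Psi k c.
Proof.
move=> pl cl; exists l.+1.
set dl := d (e 0) (e l.+1).
have dl0 : 0 < dl.
  rewrite lt_def d_ge0 andbT; apply/eqP => /d_eq0 h.
  by apply: (pres_ne0 pl).
have hpos : forall l' : 'I_n, pres l' && (l' != l) -> 0 < d (e l'.+1) (e l.+1).
  move=> l' /andP[pl' hl']; rewrite lt_def d_ge0 andbT; apply/eqP => /d_eq0 h.
  by move/eqP: hl'; apply; apply: val_inj; apply: pres_inj.
have [mu [mu0 mud hmu]] := lb_exists dl0 hpos.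
have sub : `[- dl, - dl + mu[%classic `<=` Eset l.+1 c.
  move=> t; rewrite /= in_itv /= => /andP[ht1 ht2].
  rewrite /Eset /cutv /=.
  have t0 : t < 0 by lra.
  rewrite t0.
  have h1 : \sum_(l' < n | pres l' && (t < ff l.+1 l'.+1)) c l' =
            \sum_(l' < n | pres l' && (l' != l)) c l'.
    apply: eq_bigl => l'; case: (eqVneq l' l) => [->|hne].
      by rewrite /ff d_xx -/dl sub0r ltNge ht1 andbF.
    rewrite /= ?andbT; case: (boolP (pres l')) => //= pl'.
    apply: (lt_le_trans ht2); rewrite /ff -/dl.
    have := hmu l' (ltac:(by rewrite pl' hne)); lra.
  rewrite h1 (bigD1 l pl) /=.
  set S := \sum_(l' < n | pres l' && (l' != l)) c l'.
  have -> : S - (c l + S) = - c l by ring.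
  by rewrite oppr_eq0.
have := leb_mono (measurable_itv _) (@Eset_meas n l.+1 c) sub.
rewrite lebE lebesgue_measure_itv /= lte_fin ltrDl mu0 /= lee_fin.
by apply: lt_le_trans; rewrite addrAC subrr add0r.
Qed.

Definition incl n (c : Fg n) : Fg n.+1 :=
  [ffun l : 'I_n.+1 => (if (insub (val l) : option 'I_n) is Some l' then c l' else 0) : 'Z_m].

Lemma incl_widen n (c : Fg n) (l : 'I_n) : incl c (widen_ord (leqnSn n) l) = c l.
Proof. by rewrite ffunE /= valK. Qed.

Lemma incl_max n (c : Fg n) : incl c ord_max = 0.
Proof. by rewrite ffunE /= insubN // ltnn. Qed.

Lemma incl_sum n (c : Fg n) (P : pred nat) :
  \sum_(l < n.+1 | P l) incl c l = \sum_(l < n | P l) c l.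
Proof.
rewrite big_mkcond big_ord_recr /= incl_max if_same addr0 [RHS]big_mkcond.
by apply: eq_bigr => l _; rewrite incl_widen.
Qed.

Lemma cutv_incl n k t (c : Fg n) : cutv k t (incl c) = cutv k t c.
Proof.
rewrite /cutv (incl_sum c (fun l => pres l && (t < ff k l.+1))).
by rewrite (incl_sum c pres).
Qed.

Lemma Psi_incl n k (c : Fg n) : Psi k (incl c) = Psi k c.
Proof.
rewrite /Psi; congr (fine (lebesgue_measure _)).
by apply/seteqP; split => t; rewrite /Eset /= cutv_incl.
Qed.

Lemma inclB n (c c' : Fg n) : incl (c - c') = incl c - incl c'.
Proof.
apply/ffunP => l; rewrite !ffunE.
by case: (insub (val l) : option 'I_n) => [l'|]; rewrite ?ffunE ?subrr.
Qed.

Lemma ptincl n i : (i <= n)%N -> incl (pt n i) = pt n.+1 i.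
Proof.
move=> hi; apply/ffunP => l; rewrite !ffunE.
case: insubP => [l' _ hv|hl]; first by rewrite ffunE hv.
case: (posnP (fo i)) => h; first by rewrite h.
have h1 : (val l < n.+1)%N := ltn_ord l.
have h2 : (fo i <= n)%N by case: (foP i) => _ hh _; lia.
rewrite (_ : (val l == (fo i).-1) = false) ?andbF //.
apply/negbTE/eqP => e1.
have e2 : (val l).+1 = fo i by rewrite e1 prednK.
have hl' : ~~ (nat_of_ord l < n)%N := hl.
have e3 : (nat_of_ord l).+1 = fo i := e2.
clear e1 e2 hl h1.
lia.
Qed.

Definition absF n (c : Fg n) : bool := [exists l : 'I_n, ~~ pres l && (c l != 0)].

Lemma absD n (c c' : Fg n) : absF (c + c') -> absF c || absF c'.
Proof.
move/existsP => [l /andP[npl]]; rewrite ffunE => h.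
case: (eqVneq (c l) 0) => hc.
  apply/orP; right; apply/existsP; exists l; rewrite npl /=.
  by move: h; rewrite hc add0r.
by apply/orP; left; apply/existsP; exists l; rewrite npl hc.
Qed.

Lemma absN n (c : Fg n) : absF (- c) = absF c.
Proof. by apply: eq_existsb => l; rewrite ffunE oppr_eq0. Qed.

Lemma abs0 n : absF (0 : Fg n) = false.
Proof. by apply/existsP => -[l]; rewrite ffunE eqxx andbF. Qed.

Lemma pt_pres n i (l : 'I_n) : ~~ pres l -> pt n i l = 0.
Proof.
move=> npl; rewrite ffunE; case: (boolP (fo i != 0%N)) => //= hfo.
case: eqP => //= hl; case/negP: npl.
have e1 : (nat_of_ord l).+1 = fo i by rewrite hl prednK // lt0n.
by rewrite /pres e1 fo_fo.
Qed.

Lemma Fg_B n (c c' : Fg n) l : (c - c') l = c l - c' l.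
Proof. by rewrite !ffunE. Qed.

Lemma abs_ptB n i j : absF (pt n i - pt n j) = false.
Proof.
apply/existsP => -[l /andP[npl]].
by rewrite Fg_B (pt_pres i npl) (pt_pres j npl) subrr eqxx.
Qed.

Lemma abs_incl n (c : Fg n) : absF (incl c) = absF c.
Proof.
apply/existsP/existsP => -[l /andP[npl hl]].
  move: hl; rewrite ffunE; case: insubP => [l' _ hv|]; last by rewrite eqxx.
  by move=> h; exists l'; rewrite h andbT hv.
by exists (widen_ord (leqnSn n) l); rewrite incl_widen hl andbT.
Qed.

Lemma Fg_exp n (c : Fg n) : c *+ m = 0.
Proof.
apply/ffunP => l; rewrite ffunMnE ffunE -mulr_natr.
by rewrite (_ : m%:R = 0 :> 'Z_m) ?mulr0 // pchar_Zp.
Qed.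

Definition V0 n (c : Fg n) := sup (range (fun k => Psi k c)).

Lemma V0_has n (c : Fg n) : has_sup (range (fun k => Psi k c)).
Proof.
split; first by exists (Psi 0 c), 0%N.
by exists (2 * Bn n) => y [k _ <-]; exact: Psi_le.
Qed.

Lemma V0_ub n (c : Fg n) k : Psi k c <= V0 c.
Proof. by apply: sup_upper_bound; [exact: V0_has | exists k]. Qed.

Lemma V0_le n (c : Fg n) x : (forall k, Psi k c <= x) -> V0 c <= x.
Proof.
move=> h; apply: ge_sup; first by exists (Psi 0 c), 0%N.
by move=> y [k _ <-].
Qed.

Lemma V0_ge0 n (c : Fg n) : 0 <= V0 c.
Proof. exact: le_trans (Psi_ge0 0 c) (V0_ub c 0). Qed.

Lemma V0_incl n (c : Fg n) : V0 (incl c) = V0 c.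
Proof.
rewrite /V0 (_ : (fun k => Psi k (incl c)) = (fun k => Psi k c)) //.
by apply/funext => k; exact: Psi_incl.
Qed.

Lemma V0_ptB n i j : (i <= n)%N -> (j <= n)%N -> V0 (pt n i - pt n j) = d (e i) (e j).
Proof.
move=> hi hj; apply/le_anti/andP; split.
  apply: V0_le => k; rewrite Psi_ptB //.
  have -> : ff k i - ff k j = d (e i) (e k) - d (e j) (e k) by rewrite /ff; ring.
  rewrite ler_norml; have h1 := d_tri (e i) (e j) (e k).
  have h2 := d_tri (e j) (e i) (e k); rewrite (d_sym (e j) (e i)) in h2.
  apply/andP; split; lra.
apply: le_trans (V0_ub _ j); rewrite Psi_ptB //.
have -> : ff j i - ff j j = d (e i) (e j) by rewrite /ff d_xx; ring.
by rewrite ger0_norm.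
Qed.

Lemma V0_pos n (c : Fg n) : c != 0 -> ~~ absF c -> 0 < V0 c.
Proof.
move=> c0 na.
have [l hl] : exists l, c l != 0.
  apply/existsP; apply: contraR c0 => /existsPn h; apply/eqP/ffunP => l.
  by rewrite ffunE; move/negPn/eqP: (h l).
have pl : pres l.
  apply/negPn/negP => npl; case/negP: na; apply/existsP; exists l; by rewrite npl hl.
have [k hk] := Psi_pos pl hl.
exact: lt_le_trans hk (V0_ub c k).
Qed.

Definition V1 n (c : Fg n) := V0 c + (absF c)%:R.

Lemma V1_value n : is_value (@V1 n).
Proof.
split; [|split; [|split]].
- by move=> c; rewrite /V1 addr_ge0 ?V0_ge0.
- move=> c; split; last first.
    move=> ->; rewrite /V1 abs0 addr0; apply/le_anti; rewrite V0_ge0 andbT.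
    by apply: V0_le => k; rewrite Psi0.
  move=> h; apply/eqP; apply/negP => /negP c0.
  case: (boolP (absF c)) => ha.
    by move: h; rewrite /V1 ha /= mulr1n; have := V0_ge0 c; lra.
  by move: h; rewrite /V1 (negbTE ha) addr0; have := V0_pos c0 ha; lra.
- move=> c; rewrite /V1 absN; congr (_ + _).
  by rewrite /V0 (_ : (fun k => Psi k (- c)) = (fun k => Psi k c)) //; apply/funext => k; exact: PsiN.
- move=> c c'; rewrite /V1.
  have h1 : V0 (c + c') <= V0 c + V0 c'.
    apply: V0_le => k; apply: le_trans (PsiD k c c') _.
    by apply: lerD; exact: V0_ub.
  have h2 : ((absF (c + c')) : nat)%:R <= ((absF c) : nat)%:R + ((absF c') : nat)%:R :> R.
    case: (boolP (absF (c + c'))) => h; last by rewrite /= addr_ge0.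
    rewrite -natrD ler_nat; move: (absD h).
    by case: (absF c); case: (absF c').
  lra.
Qed.
End Free.

Section Final.
Variables (R : realType) (r : \bar R) (N : nat) (G : zmodType) (p : G -> R).
Hypotheses (hr : r = 1%E \/ r = +oo%E) (hN : N <> 1%N) (hG : is_Gr r N p).
Variables (X : Type) (d : X -> X -> R).
Hypotheses (hd : is_metric d) (hdiam : forall x y : X, ((d x y)%:E <= r)%E).

Let d_ge0 x y : 0 <= d x y. Proof. by case: hd. Qed.
Let d_xx x : d x x = 0. Proof. by case: hd => _ [h _]; apply/(h x x). Qed.
Let d_sym x y : d x y = d y x. Proof. by case: hd => _ [_ [h _]]. Qed.
Let d_tri x y z : d x z <= d x y + d y z. Proof. by case: hd => _ [_ [_ h]]. Qed.

Lemma embed_seq (e : nat -> X) : exists gam : nat -> G,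
  forall i j, p (gam i - gam j) = d (e i) (e j).
Proof.
case: hG => [[hcomp [pv [_ [_ [pb _]]]]] [hG2 _]].
pose m := if N == 0%N then 2%N else N.
have hm : (1 < m)%N by rewrite /m; case: eqP => // h; move: hN h; case: N => [|[|]].
have hmN : (N != 0)%N -> m = N by rewrite /m => /negbTE ->.
pose F n : finZmodType := Fg m n.
pose V n (c : F n) := trunc r (V1 d e c).
have := @tower R r N G p hr pv pb hG2 hcomp F V (fun n => @incl m n)
  (fun n => pt e m n) (fun i j => d (e i) (e j)).
apply.
- by move=> n; apply: trunc_value => //; exact: V1_value.
- by move=> n c; exact: trunc_bound.
- by move=> n hN0 c; rewrite -(hmN hN0); exact: Fg_exp.
- by move=> n x y; exact: inclB.
- by move=> n z; rewrite /V /V1 V0_incl abs_incl.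
- by move=> n i hi; exact: ptincl.
- by move=> n; exact: pt0.
- move=> n i j hi hj; rewrite /V /V1 (V0_ptB e m hd) // abs_ptB addr0.
  exact: trunc_id.
Qed.

Lemma main_embed : separable_metric d -> exists f : X -> G, forall x y, p (f x - f y) = d x y.
Proof.
case: hG => [[hcomp [pv _]] _].
move=> [D [Dc Ddense]].
case: (pselect (exists x : X, True)) => [[x0 _]|hX]; last first.
  by exists (fun _ => 0) => x; exfalso; apply: hX; exists x.
have /countable_injP [f finj] := Dc.
pose e k := match pselect (exists x, D x /\ f x = k) with
  | left h => sval (cid h) | right _ => x0 end.
have edense : forall x eps, 0 < eps -> exists k, d x (e k) < eps.
  move=> x eps e0; have [y [Dy hy]] := Ddense x eps e0.
  exists (f y); rewrite /e; case: pselect => [h|h]; last by exfalso; apply: h; exists y.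
  case: (cid h) => z [Dz fz] /=.
  have -> : z = y by apply: finj; rewrite ?inE.
  exact: hy.
have [gam hgam] := embed_seq e.
have seqx : forall x, exists k : nat -> nat, forall n, d x (e (k n)) < hh R n.
  move=> x; have [k hk] := choice (fun n => edense x (hh R n) (hh_gt0 R n)).
  by exists k.
have [kx hkx] := choice seqx.
have limx : forall x, exists l, forall eps, 0 < eps -> exists M, forall n, (M <= n)%N ->
    p (gam (kx x n) - l) < eps.
  move=> x; apply: hcomp => eps e0.
  have [M hM] := hh_small (divr_gt0 e0 (ltr0n R 2)).
  exists M => m' n hm hn; rewrite hgam.
  have h1 := d_tri (e (kx x m')) x (e (kx x n)).
  have h2 := hkx x m'; have h3 := hkx x n; rewrite d_sym in h2.
  have h4 := hM m' hm; have h5 := hM n hn.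
  lra.
have [F hF] := choice limx.
exists F => x y.
apply: (@close_eq _ _ _ 4) => // eps e0.
have [Mx hMx] := hF x eps e0; have [My hMy] := hF y eps e0.
have [M hM] := hh_small e0.
pose n := (Mx + My + M)%N.
have ha := hMx n (ltac:(rewrite /n; lia)).
have hb := hMy n (ltac:(rewrite /n; lia)).
have hn := hM n (ltac:(rewrite /n; lia)).
have hab := hgam (kx x n) (kx y n).
have hd1 := vdist pv (F x - F y) (gam (kx x n) - gam (kx y n)).
rewrite subsub in hd1.
have hs := vD pv (F x - gam (kx x n)) (gam (kx y n) - F y).
rewrite (vB pv (F x)) in hs.
have hx := hkx x n; have hy := hkx y n.
have t1 := d_tri (e (kx x n)) x (e (kx y n)).
have t2 := d_tri x y (e (kx y n)).
have t3 := d_tri x (e (kx x n)) y.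
have t4 := d_tri (e (kx x n)) (e (kx y n)) y.
have s1 : d (e (kx x n)) x = d x (e (kx x n)) := d_sym _ _.
have s2 : d (e (kx y n)) y = d y (e (kx y n)) := d_sym _ _.
move: hd1; rewrite hab => hd1.
rewrite ler_norml; rewrite ler_norml in hd1; case/andP: hd1 => hd1 hd2.
apply/andP; split; lra.
Qed.
End Final.

Unset Implicit Arguments.
Theorem theorem5p12 (R : realType) (r : \bar R) (N : nat)
    (hr : r = 1%E \/ r = +oo%E) (hN : N <> 1%N)
    (G : zmodType) (p : G -> R) (hG : is_Gr r N p)
    (X : Type) (d : X -> X -> R) (hd : is_metric d) (hsep : separable_metric d)
    (hdiam : forall x y : X, ((d x y)%:E <= r)%E) :
  exists f : X -> G, forall x y : X, p (f x - f y) = d x y.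
Proof. exact: (main_embed hr hN hG hd hdiam hsep). Qed.
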